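(* Fix $\gamma\neq0$. Consider the subclass of equations $i\psi_t+\psi_{xx}+|\psi|^\gamma\psi+V\psi=0$ with stationary potentials, i.e. $V=V(x)$ an arbitrary smooth complex-valued function of $x$. The intersection of the maximal Lie invariance algebras of all equations in this subclass is $\langle M,\ D(1)\rangle=\langle M,\ \partial_t\rangle$.
   Context: $M=i(\psi\partial_\psi-\psi^*\partial_{\psi^*})$, and $D(1)=\partial_t$. Lie symmetries are vector fields on the space of $(t,x,\psi,\psi^* )$, with $\psi^*$ treated as an independent variable. *)

(* Defs.v *)
From Stdlib Require Import Reals List.
From Coquelicot Require Import Coquelicot.
Open Scope R_scope.

(* ---------- Second-order jet space for two dependent variables ----------
   psi = u + i v (real form; psi^* = u - i v).  A point of the second-order
   jet space J^2 over (t,x) is represented as p : nat -> R whose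
   coordinates 0..13 are named below (other coordinates are irrelevant). *)
Definition jT := 0%nat.   Definition jX := 1%nat.
Definition jU := 2%nat.   Definition jV := 3%nat.
Definition jUt := 4%nat.  Definition jUx := 5%nat.
Definition jVt := 6%nat.  Definition jVx := 7%nat.
Definition jUtt := 8%nat. Definition jUtx := 9%nat. Definition jUxx := 10%nat.
Definition jVtt := 11%nat. Definition jVtx := 12%nat. Definition jVxx := 13%nat.

Definition jet := nat -> R.

Definition upd (p : jet) (k : nat) (s : R) : jet :=
  fun j => if Nat.eqb j k then s else p j.

Definition pd (k : nat) (g : jet -> R) : jet -> R :=
  fun p => Derive (fun s => g (upd p k s)) (p k).

Fixpoint iter_pd (l : list nat) (g : jet -> R) : jet -> R :=
  match l with nil => g | k :: l' => pd k (iter_pd l' g) end.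

Definition smooth_on (n : nat) (P : jet -> Prop) (g : jet -> R) : Prop :=
  forall (l : list nat) (k : nat) (p : jet),
    List.Forall (fun i : nat => (i < n)%nat) l -> (k < n)%nat -> P p ->
    ex_derive (fun s => iter_pd l g (upd p k s)) (p k).

Definition smooth1 (f : R -> R) : Prop :=
  forall (n : nat) (y : R), ex_derive (Derive_n f n) y.

Definition dom (p : jet) : Prop := 0 < p jU ^ 2 + p jV ^ 2.

(* ---------- vector fields on (t,x,u,v) space ----------
   Q = tau d_t + xi d_x + phi d_u + chi d_v; in complex notation
   Q = tau d_t + xi d_x + eta d_psi + eta^* d_psi^*, eta = phi + i chi. *)
Record vfield := VField {
  vf_tau : R -> R -> R -> R -> R;
  vf_xi  : R -> R -> R -> R -> R;
  vf_phi : R -> R -> R -> R -> R;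
  vf_chi : R -> R -> R -> R -> R }.

Definition lift (f : R -> R -> R -> R -> R) : jet -> R :=
  fun p => f (p jT) (p jX) (p jU) (p jV).

Definition smooth_vfield (Q : vfield) : Prop :=
  smooth_on 4 dom (lift (vf_tau Q)) /\ smooth_on 4 dom (lift (vf_xi Q)) /\
  smooth_on 4 dom (lift (vf_phi Q)) /\ smooth_on 4 dom (lift (vf_chi Q)).

(* total derivatives, acting on functions of jets of order <= 1 *)
Definition Dt (g : jet -> R) : jet -> R := fun p =>
  pd jT g p + p jUt * pd jU g p + p jVt * pd jV g p
  + p jUtt * pd jUt g p + p jUtx * pd jUx g p
  + p jVtt * pd jVt g p + p jVtx * pd jVx g p.

Definition Dx (g : jet -> R) : jet -> R := fun p =>
  pd jX g p + p jUx * pd jU g p + p jVx * pd jV g p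
  + p jUtx * pd jUt g p + p jUxx * pd jUx g p
  + p jVtx * pd jVt g p + p jVxx * pd jVx g p.

Definition pr2 (Q : vfield) (g : jet -> R) : jet -> R := fun p =>
  let ta := lift (vf_tau Q) in let xi := lift (vf_xi Q) in
  let ph := lift (vf_phi Q) in let ch := lift (vf_chi Q) in
  let ph_t := fun q => Dt ph q - q jUt * Dt ta q - q jUx * Dt xi q in
  let ph_x := fun q => Dx ph q - q jUt * Dx ta q - q jUx * Dx xi q in
  let ch_t := fun q => Dt ch q - q jVt * Dt ta q - q jVx * Dt xi q in
  let ch_x := fun q => Dx ch q - q jVt * Dx ta q - q jVx * Dx xi q in
  let ph_tt := Dt ph_t p - p jUtt * Dt ta p - p jUtx * Dt xi p in
  let ph_tx := Dx ph_t p - p jUtt * Dx ta p - p jUtx * Dx xi p in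
  let ph_xx := Dx ph_x p - p jUtx * Dx ta p - p jUxx * Dx xi p in
  let ch_tt := Dt ch_t p - p jVtt * Dt ta p - p jVtx * Dt xi p in
  let ch_tx := Dx ch_t p - p jVtt * Dx ta p - p jVtx * Dx xi p in
  let ch_xx := Dx ch_x p - p jVtx * Dx ta p - p jVxx * Dx xi p in
  ta p * pd jT g p + xi p * pd jX g p + ph p * pd jU g p + ch p * pd jV g p
  + ph_t p * pd jUt g p + ph_x p * pd jUx g p
  + ch_t p * pd jVt g p + ch_x p * pd jVx g p
  + ph_tt * pd jUtt g p + ph_tx * pd jUtx g p + ph_xx * pd jUxx g p
  + ch_tt * pd jVtt g p + ch_tx * pd jVtx g p + ch_xx * pd jVxx g p.

(* The equation  i psi_t + psi_xx + |psi|^gamma psi + V(x) psi = 0,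
   V = a + i b, written as its real part (NLS_re) and imaginary part (NLS_im);
   |psi|^gamma = (u^2+v^2)^(gamma/2). *)
Definition rho (gamma : R) (p : jet) : R := Rpower (p jU ^ 2 + p jV ^ 2) (gamma / 2).

Definition NLS_re (gamma : R) (a b : R -> R) : jet -> R := fun p =>
  - p jVt + p jUxx + rho gamma p * p jU + a (p jX) * p jU - b (p jX) * p jV.

Definition NLS_im (gamma : R) (a b : R -> R) : jet -> R := fun p =>
  p jUt + p jVxx + rho gamma p * p jV + a (p jX) * p jV + b (p jX) * p jU.

Definition is_lie_symmetry (gamma : R) (a b : R -> R) (Q : vfield) : Prop :=
  forall p : jet, dom p -> NLS_re gamma a b p = 0 -> NLS_im gamma a b p = 0 ->
    pr2 Q (NLS_re gamma a b) p = 0 /\ pr2 Q (NLS_im gamma a b) p = 0.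

(* Q = c1 M + c2 d_t, with M = i(psi d_psi - psi^* d_psi^* ) = -v d_u + u d_v *)
Definition in_span_M_Dt (Q : vfield) : Prop :=
  exists c1 c2 : R, forall t x u v : R, 0 < u ^ 2 + v ^ 2 ->
    vf_tau Q t x u v = c2 /\ vf_xi Q t x u v = 0 /\
    vf_phi Q t x u v = - c1 * v /\ vf_chi Q t x u v = c1 * u.

(* Main.v *)
Require Import Defs.
From Stdlib Require Import Reals.
From Coquelicot Require Import Coquelicot.
Open Scope R_scope.

From Stdlib Require Import Lra Lia FunctionalExtensionality List.
Import Defs.

Lemma ball_R (x y : R) (e : R) : ball x e y <-> Rabs (y - x) < e.
Proof. unfold ball; simpl; unfold AbsRing_ball, abs, minus, plus, opp; simpl. tauto. Qed.

Lemma zero_deriv_eq (g : R -> R) (a b : R) :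
  (forall y, Rmin a b <= y <= Rmax a b -> is_derive g y 0) -> g a = g b.
Proof.
  intros H.
  destruct (MVT_gen g a b (fun _ => 0)) as [c [Hc Hd]].
  - intros y Hy. apply H. lra.
  - intros y Hy. apply continuity_pt_filterlim. apply (ex_derive_continuous g).
    eexists. apply H. exact Hy.
  - lra.
Qed.

Lemma upd_same p k : upd p k (p k) = p.
Proof. apply functional_extensionality; intro j; unfold upd.
  destruct (Nat.eqb j k) eqn:E; [apply Nat.eqb_eq in E; subst|]; reflexivity. Qed.

Lemma upd_upd p k s s' : upd (upd p k s) k s' = upd p k s'.
Proof. apply functional_extensionality; intro j; unfold upd.
  destruct (Nat.eqb j k); reflexivity. Qed.

Lemma upd_k p k s : upd p k s k = s.
Proof. unfold upd. rewrite Nat.eqb_refl. reflexivity. Qed.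

Lemma upd_j p k s j : j <> k -> upd p k s j = p j.
Proof. intro H; unfold upd. apply Nat.eqb_neq in H; rewrite H; reflexivity. Qed.

Lemma pd_const k g p : (forall s, g (upd p k s) = g p) -> pd k g p = 0.
Proof. intro H; unfold pd. rewrite (Derive_ext _ (fun _ => g p)) by exact H.
  apply Derive_const. Qed.

Definition agree (L : list nat) (p q : jet) := forall j, In j L -> p j = q j.
Definition reads (L : list nat) (g : jet -> R) := forall p q, agree L p q -> g p = g q.

Lemma agree_upd L p q k s : agree L p q -> agree L (upd p k s) (upd q k s).
Proof. intros H j Hj; unfold upd; destruct (Nat.eqb j k); auto. Qed.

Lemma pd_reads L g k p q : reads L g -> agree L p q -> p k = q k -> pd k g p = pd k g q.
Proof. intros Hr Ha Hk; unfold pd; rewrite Hk. apply Derive_ext; intro s.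
  apply Hr, agree_upd, Ha. Qed.

Lemma pd_notread L g k p : reads L g -> ~ In k L -> pd k g p = 0.
Proof. intros Hr Hn; apply pd_const; intro s; apply Hr; intros j Hj.
  apply upd_j; intro; subst; auto. Qed.

Lemma locally_dom p k : dom p -> locally (p k) (fun s => dom (upd p k s)).
Proof.
  intro Hd. unfold dom in *.
  destruct (Nat.eq_dec k jU) as [->|H2]; [|destruct (Nat.eq_dec k jV) as [->|H3]].
  - destruct (Req_dec (p jV) 0) as [Hv|Hv].
    + assert (Hu : 0 < Rabs (p jU)).
      { apply Rabs_pos_lt; intro Hu; rewrite Hu, Hv in Hd; lra. }
      exists (mkposreal _ Hu); intros y Hy; apply ball_R in Hy; change (Rabs (y - p jU) < Rabs (p jU)) in Hy.
      rewrite upd_k, upd_j by (unfold jU, jV; lia).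
      assert (y <> 0). { intro Hy0; rewrite Hy0 in Hy. replace (0 - p jU) with (- p jU) in Hy by ring. rewrite Rabs_Ropp in Hy; lra. }
      assert (0 < y ^ 2) by (apply pow2_gt_0; auto). assert (0 <= p jV ^ 2) by apply pow2_ge_0. lra.
    + exists (mkposreal 1 Rlt_0_1); intros y _.
      rewrite upd_k, upd_j by (unfold jU, jV; lia).
      assert (0 < p jV ^ 2) by (apply pow2_gt_0; auto). assert (0 <= y ^ 2) by apply pow2_ge_0. lra.
  - destruct (Req_dec (p jU) 0) as [Hu|Hu].
    + assert (Hv : 0 < Rabs (p jV)).
      { apply Rabs_pos_lt; intro Hv; rewrite Hu, Hv in Hd; lra. }
      exists (mkposreal _ Hv); intros y Hy; apply ball_R in Hy; change (Rabs (y - p jV) < Rabs (p jV)) in Hy.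
      rewrite upd_k, upd_j by (unfold jU, jV; lia).
      assert (y <> 0). { intro Hy0; rewrite Hy0 in Hy. replace (0 - p jV) with (- p jV) in Hy by ring. rewrite Rabs_Ropp in Hy; lra. }
      assert (0 < y ^ 2) by (apply pow2_gt_0; auto). assert (0 <= p jU ^ 2) by apply pow2_ge_0. lra.
    + exists (mkposreal 1 Rlt_0_1); intros y _.
      rewrite upd_k, upd_j by (unfold jU, jV; lia).
      assert (0 < p jU ^ 2) by (apply pow2_gt_0; auto). assert (0 <= y ^ 2) by apply pow2_ge_0. lra.
  - exists (mkposreal 1 Rlt_0_1); intros y _.
    rewrite !upd_j by auto. exact Hd.
Qed.

Lemma is_derive_ext_R (f g : R -> R) (x l : R) :
  (forall t : R, f t = g t) -> is_derive f x l -> is_derive g x l.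
Proof. intros H; apply is_derive_ext; exact H. Qed.

Lemma ex_derive_plus_R (f g : R -> R) (x : R) :
  ex_derive f x -> ex_derive g x -> ex_derive (fun y => f y + g y) x.
Proof. intros H1 H2. exact (ex_derive_plus f g x H1 H2). Qed.
Lemma ex_derive_scal_R (f : R -> R) (k x : R) :
  ex_derive f x -> ex_derive (fun y => k * f y) x.
Proof. intros H1. exact (ex_derive_scal f k x H1). Qed.
Lemma ex_derive_minus_R (f g : R -> R) (x : R) :
  ex_derive f x -> ex_derive g x -> ex_derive (fun y => f y - g y) x.
Proof. intros H1 H2. exact (ex_derive_minus f g x H1 H2). Qed.

Lemma pd_ext_dom g h k p : (forall q, dom q -> g q = h q) -> dom p -> pd k g p = pd k h p.
Proof. intros H Hp; unfold pd; apply Derive_ext_loc.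
  eapply filter_imp; [|apply locally_dom; exact Hp]. intros s Hs; apply H, Hs. Qed.

Definition dT (f : R -> R -> R -> R -> R) : R -> R -> R -> R -> R :=
  fun t x u v => Derive (fun s => f s x u v) t.
Definition dX (f : R -> R -> R -> R -> R) : R -> R -> R -> R -> R :=
  fun t x u v => Derive (fun s => f t s u v) x.
Definition dU (f : R -> R -> R -> R -> R) : R -> R -> R -> R -> R :=
  fun t x u v => Derive (fun s => f t x s v) u.
Definition dV (f : R -> R -> R -> R -> R) : R -> R -> R -> R -> R :=
  fun t x u v => Derive (fun s => f t x u s) v.

Lemma Dt_lift f q : Dt (lift f) q = lift (dT f) q + q jUt * lift (dU f) q + q jVt * lift (dV f) q.
Proof. unfold Dt.
  rewrite (pd_const jUt), (pd_const jUx), (pd_const jVt), (pd_const jVx) by (intro; reflexivity).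
  change (pd jT (lift f) q) with (lift (dT f) q).
  change (pd jU (lift f) q) with (lift (dU f) q).
  change (pd jV (lift f) q) with (lift (dV f) q). ring. Qed.

Lemma Dx_lift f q : Dx (lift f) q = lift (dX f) q + q jUx * lift (dU f) q + q jVx * lift (dV f) q.
Proof. unfold Dx.
  rewrite (pd_const jUt), (pd_const jUx), (pd_const jVt), (pd_const jVx) by (intro; reflexivity).
  change (pd jX (lift f) q) with (lift (dX f) q).
  change (pd jU (lift f) q) with (lift (dU f) q).
  change (pd jV (lift f) q) with (lift (dV f) q). ring. Qed.

Definition TA Q := lift (vf_tau Q).
Definition XI Q := lift (vf_xi Q).
Definition PH Q := lift (vf_phi Q).
Definition CH Q := lift (vf_chi Q).

Definition PHt Q := fun q => Dt (PH Q) q - q jUt * Dt (TA Q) q - q jUx * Dt (XI Q) q.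
Definition PHx Q := fun q => Dx (PH Q) q - q jUt * Dx (TA Q) q - q jUx * Dx (XI Q) q.
Definition CHt Q := fun q => Dt (CH Q) q - q jVt * Dt (TA Q) q - q jVx * Dt (XI Q) q.
Definition CHx Q := fun q => Dx (CH Q) q - q jVt * Dx (TA Q) q - q jVx * Dx (XI Q) q.
Definition PHxx Q p := Dx (PHx Q) p - p jUtx * Dx (TA Q) p - p jUxx * Dx (XI Q) p.
Definition CHxx Q p := Dx (CHx Q) p - p jVtx * Dx (TA Q) p - p jVxx * Dx (XI Q) p.

Lemma pr2_formula Q g p :
  pd jT g p = 0 -> pd jUx g p = 0 -> pd jVx g p = 0 -> pd jUtt g p = 0 ->
  pd jUtx g p = 0 -> pd jVtt g p = 0 -> pd jVtx g p = 0 ->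
  pr2 Q g p = XI Q p * pd jX g p + PH Q p * pd jU g p + CH Q p * pd jV g p
    + PHt Q p * pd jUt g p + CHt Q p * pd jVt g p + PHxx Q p * pd jUxx g p
    + CHxx Q p * pd jVxx g p.
Proof. intros H1 H2 H3 H4 H5 H6 H7.
  unfold pr2, PHxx, CHxx, PHt, CHt, PHx, CHx, TA, XI, PH, CH. cbv zeta.
  rewrite H1, H2, H3, H4, H5, H6, H7. ring. Qed.

Lemma pd_lift_T f p : pd jT (lift f) p = lift (dT f) p. Proof. reflexivity. Qed.
Lemma pd_lift_X f p : pd jX (lift f) p = lift (dX f) p. Proof. reflexivity. Qed.
Lemma pd_lift_U f p : pd jU (lift f) p = lift (dU f) p. Proof. reflexivity. Qed.
Lemma pd_lift_V f p : pd jV (lift f) p = lift (dV f) p. Proof. reflexivity. Qed.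

Definition rr (p : jet) := p jU ^ 2 + p jV ^ 2.
Definition RU gamma p := gamma * p jU * rho gamma p / rr p.
Definition RV gamma p := gamma * p jV * rho gamma p / rr p.

Lemma reads_re gamma a b : reads (jX :: jU :: jV :: jVt :: jUxx :: nil) (NLS_re gamma a b).
Proof. intros p q H; unfold NLS_re, rho.
  rewrite !(H jX), !(H jU), !(H jV), !(H jVt), !(H jUxx) by (simpl; tauto). reflexivity. Qed.
Lemma reads_im gamma a b : reads (jX :: jU :: jV :: jUt :: jVxx :: nil) (NLS_im gamma a b).
Proof. intros p q H; unfold NLS_im, rho.
  rewrite !(H jX), !(H jU), !(H jV), !(H jUt), !(H jVxx) by (simpl; tauto). reflexivity. Qed.

Ltac notin := simpl; unfold jT, jX, jU, jV, jUt, jUx, jVt, jVx, jUtt, jUtx, jUxx, jVtt, jVtx, jVxx; intuition lia.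

Lemma pd_re_Vt gamma a b p : pd jVt (NLS_re gamma a b) p = -1.
Proof. unfold pd. apply is_derive_unique.
  apply (is_derive_ext_R (fun s => - s + (p jUxx + rho gamma p * p jU + a (p jX) * p jU - b (p jX) * p jV))).
  - intro s; unfold NLS_re, rho; rewrite upd_k, !upd_j by (unfold jVt, jUxx, jUt, jVxx, jU, jV, jX; lia); ring.
  - auto_derive; auto; ring. Qed.

Lemma pd_re_Uxx gamma a b p : pd jUxx (NLS_re gamma a b) p = 1.
Proof. unfold pd. apply is_derive_unique.
  apply (is_derive_ext_R (fun s => s + (- p jVt + rho gamma p * p jU + a (p jX) * p jU - b (p jX) * p jV))).
  - intro s; unfold NLS_re, rho; rewrite upd_k, !upd_j by (unfold jVt, jUxx, jUt, jVxx, jU, jV, jX; lia); ring.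
  - auto_derive; auto; ring. Qed.

Lemma pd_im_Ut gamma a b p : pd jUt (NLS_im gamma a b) p = 1.
Proof. unfold pd. apply is_derive_unique.
  apply (is_derive_ext_R (fun s => s + (p jVxx + rho gamma p * p jV + a (p jX) * p jV + b (p jX) * p jU))).
  - intro s; unfold NLS_im, rho; rewrite upd_k, !upd_j by (unfold jUt, jVxx, jU, jV, jX; lia). ring.
  - auto_derive; auto; ring. Qed.

Lemma pd_im_Vxx gamma a b p : pd jVxx (NLS_im gamma a b) p = 1.
Proof. unfold pd. apply is_derive_unique.
  apply (is_derive_ext_R (fun s => s + (p jUt + rho gamma p * p jV + a (p jX) * p jV + b (p jX) * p jU))).
  - intro s; unfold NLS_im, rho; rewrite upd_k, !upd_j by (unfold jUt, jVxx, jU, jV, jX; lia). ring.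
  - auto_derive; auto; ring. Qed.

Lemma pd_re_U gamma a b p : dom p ->
  pd jU (NLS_re gamma a b) p = RU gamma p * p jU + rho gamma p + a (p jX).
Proof. intro Hd; unfold dom in Hd. unfold pd. apply is_derive_unique.
  apply (is_derive_ext_R (fun s => - p jVt + p jUxx + exp (gamma / 2 * ln (s ^ 2 + p jV ^ 2)) * s + a (p jX) * s - b (p jX) * p jV)).
  - intro s; unfold NLS_re, rho; rewrite upd_k, !upd_j by (unfold jVt, jUxx, jU, jV, jX; lia). reflexivity.
  - auto_derive; [lra|]. unfold RU, rho, rr, Rpower.
    replace (p jU * (p jU * 1) + p jV * (p jV * 1)) with (p jU ^ 2 + p jV ^ 2) by ring. field. lra. Qed.

Lemma pd_re_V gamma a b p : dom p ->
  pd jV (NLS_re gamma a b) p = RV gamma p * p jU - b (p jX).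
Proof. intro Hd; unfold dom in Hd. unfold pd. apply is_derive_unique.
  apply (is_derive_ext_R (fun s => - p jVt + p jUxx + exp (gamma / 2 * ln (p jU ^ 2 + s ^ 2)) * p jU + a (p jX) * p jU - b (p jX) * s)).
  - intro s; unfold NLS_re, rho; rewrite upd_k, !upd_j by (unfold jVt, jUxx, jU, jV, jX; lia). reflexivity.
  - auto_derive; [lra|]. unfold RV, rho, rr, Rpower.
    replace (p jU * (p jU * 1) + p jV * (p jV * 1)) with (p jU ^ 2 + p jV ^ 2) by ring. field. lra. Qed.

Lemma pd_im_U gamma a b p : dom p ->
  pd jU (NLS_im gamma a b) p = RU gamma p * p jV + b (p jX).
Proof. intro Hd; unfold dom in Hd. unfold pd. apply is_derive_unique.
  apply (is_derive_ext_R (fun s => p jUt + p jVxx + exp (gamma / 2 * ln (s ^ 2 + p jV ^ 2)) * p jV + a (p jX) * p jV + b (p jX) * s)).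
  - intro s; unfold NLS_im, rho; rewrite upd_k, !upd_j by (unfold jUt, jVxx, jU, jV, jX; lia). reflexivity.
  - auto_derive; [lra|]. unfold RU, rho, rr, Rpower.
    replace (p jU * (p jU * 1) + p jV * (p jV * 1)) with (p jU ^ 2 + p jV ^ 2) by ring. field. lra. Qed.

Lemma pd_im_V gamma a b p : dom p ->
  pd jV (NLS_im gamma a b) p = RV gamma p * p jV + rho gamma p + a (p jX).
Proof. intro Hd; unfold dom in Hd. unfold pd. apply is_derive_unique.
  apply (is_derive_ext_R (fun s => p jUt + p jVxx + exp (gamma / 2 * ln (p jU ^ 2 + s ^ 2)) * s + a (p jX) * s + b (p jX) * p jU)).
  - intro s; unfold NLS_im, rho; rewrite upd_k, !upd_j by (unfold jUt, jVxx, jU, jV, jX; lia). reflexivity.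
  - auto_derive; [lra|]. unfold RV, rho, rr, Rpower.
    replace (p jU * (p jU * 1) + p jV * (p jV * 1)) with (p jU ^ 2 + p jV ^ 2) by ring. field. lra. Qed.

Lemma E_re Q gamma a b p : dom p ->
  pr2 Q (NLS_re gamma a b) p =
  XI Q p * pd jX (NLS_re gamma a b) p
  + PH Q p * (RU gamma p * p jU + rho gamma p + a (p jX))
  + CH Q p * (RV gamma p * p jU - b (p jX)) - CHt Q p + PHxx Q p.
Proof. intro Hd.
  rewrite pr2_formula by (apply (pd_notread _ _ _ _ (reads_re gamma a b)); notin).
  rewrite (pd_notread _ _ jUt _ (reads_re gamma a b)) by notin.
  rewrite (pd_notread _ _ jVxx _ (reads_re gamma a b)) by notin.
  rewrite pd_re_U, pd_re_V, pd_re_Vt, pd_re_Uxx by exact Hd. ring. Qed.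

Lemma E_im Q gamma a b p : dom p ->
  pr2 Q (NLS_im gamma a b) p =
  XI Q p * pd jX (NLS_im gamma a b) p
  + PH Q p * (RU gamma p * p jV + b (p jX))
  + CH Q p * (RV gamma p * p jV + rho gamma p + a (p jX)) + PHt Q p + CHxx Q p.
Proof. intro Hd.
  rewrite pr2_formula by (apply (pd_notread _ _ _ _ (reads_im gamma a b)); notin).
  rewrite (pd_notread _ _ jVt _ (reads_im gamma a b)) by notin.
  rewrite (pd_notread _ _ jUxx _ (reads_im gamma a b)) by notin.
  rewrite pd_im_U, pd_im_V, pd_im_Ut, pd_im_Vxx by exact Hd. ring. Qed.

Definition mk (t x u v ut vt ux vx uxx vxx utx : R) : jet :=
  fun j => match j with
  | 0%nat => t | 1%nat => x | 2%nat => u | 3%nat => v | 4%nat => ut | 5%nat => ux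
  | 6%nat => vt | 7%nat => vx | 9%nat => utx | 10%nat => uxx | 13%nat => vxx | _ => 0 end.

Ltac mkred := cbv beta iota delta [mk lift jT jX jU jV jUt jUx jVt jVx jUtt jUtx jUxx jVtt jVtx jVxx].

Definition aff (al be : R) : R -> R := fun y => al * y + be.

Lemma smooth_aff al be : smooth1 (aff al be).
Proof.
  assert (H : forall n, Derive_n (aff al be) n = aff al be \/ exists c, Derive_n (aff al be) n = fun _ => c).
  { induction n as [|n [IH|[c IH]]].
    - left; reflexivity.
    - right; exists al. apply functional_extensionality; intro y. simpl. rewrite IH.
      unfold aff. apply is_derive_unique. auto_derive; auto; ring.
    - right; exists 0. apply functional_extensionality; intro y. simpl. rewrite IH.
      apply Derive_const. }
  intros n y. destruct (H n) as [E|[c E]]; rewrite E.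
  - unfold aff. auto_derive. auto.
  - auto_derive. auto. Qed.

Lemma pd_re_X_aff gamma al be al' be' p :
  pd jX (NLS_re gamma (aff al be) (aff al' be')) p = al * p jU - al' * p jV.
Proof. unfold pd. apply is_derive_unique.
  apply (is_derive_ext_R (fun s => - p jVt + p jUxx + rho gamma p * p jU + (al * s + be) * p jU - (al' * s + be') * p jV)).
  - intro s; unfold NLS_re, rho, aff; rewrite upd_k, !upd_j by (unfold jVt, jUxx, jU, jV, jX; lia). reflexivity.
  - auto_derive; auto; ring. Qed.

Lemma pd_im_X_aff gamma al be al' be' p :
  pd jX (NLS_im gamma (aff al be) (aff al' be')) p = al * p jV + al' * p jU.
Proof. unfold pd. apply is_derive_unique.
  apply (is_derive_ext_R (fun s => p jUt + p jVxx + rho gamma p * p jV + (al * s + be) * p jV + (al' * s + be') * p jU)).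
  - intro s; unfold NLS_im, rho, aff; rewrite upd_k, !upd_j by (unfold jUt, jVxx, jU, jV, jX; lia). reflexivity.
  - auto_derive; auto; ring. Qed.

Definition Rof gamma u v := Rpower (u ^ 2 + v ^ 2) (gamma / 2).

Definition SYM gamma Q := forall a b : R -> R, smooth1 a -> smooth1 b -> is_lie_symmetry gamma a b Q.

Lemma sym_aff gamma Q al be al' be' p : SYM gamma Q -> dom p ->
  NLS_re gamma (aff al be) (aff al' be') p = 0 -> NLS_im gamma (aff al be) (aff al' be') p = 0 ->
  pr2 Q (NLS_re gamma (aff al be) (aff al' be')) p = 0 /\
  pr2 Q (NLS_im gamma (aff al be) (aff al' be')) p = 0.
Proof. intros HS Hd H1 H2. apply HS; auto; apply smooth_aff. Qed.

Lemma step1 gamma Q : SYM gamma Q ->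
  forall t x u v, 0 < u ^ 2 + v ^ 2 -> vf_xi Q t x u v = 0.
Proof.
  intros HS t x u v Hd.
  set (R := Rof gamma u v).
  set (p := mk t x u v (- (R * v)) (R * u) 0 0 0 0 0).
  assert (Hdp : dom p) by (unfold dom, p; mkred; exact Hd).
  assert (Hrho : rho gamma p = R) by reflexivity.
  destruct (sym_aff gamma Q 1 (- x) 0 0 p HS Hdp) as [A1 B1].
  { unfold NLS_re, aff; rewrite Hrho; unfold p; mkred; ring. }
  { unfold NLS_im, aff; rewrite Hrho; unfold p; mkred; ring. }
  destruct (sym_aff gamma Q 0 0 0 0 p HS Hdp) as [A0 B0].
  { unfold NLS_re, aff; rewrite Hrho; unfold p; mkred; ring. }
  { unfold NLS_im, aff; rewrite Hrho; unfold p; mkred; ring. }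
  rewrite E_re in A1, A0 by exact Hdp. rewrite E_im in B1, B0 by exact Hdp.
  rewrite pd_re_X_aff in A1, A0. rewrite pd_im_X_aff in B1, B0.
  assert (EX : XI Q p = vf_xi Q t x u v) by reflexivity.
  assert (Eu : p jU = u) by reflexivity. assert (Ev : p jV = v) by reflexivity.
  assert (Ex : p jX = x) by reflexivity.
  rewrite EX, Eu, Ev in *. rewrite Ex in *. unfold aff in *.
  pose proof (f_equal2 Rminus A1 A0) as HA. ring_simplify in HA.
  pose proof (f_equal2 Rminus B1 B0) as HB. ring_simplify in HB.
  assert (H0 : vf_xi Q t x u v * (u^2+v^2) = (vf_xi Q t x u v * u) * u + (vf_xi Q t x u v * v) * v) by ring.
  rewrite HA, HB in H0. replace (0 * u + 0 * v) with 0 in H0 by ring.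
  apply Rmult_integral in H0. destruct H0; [auto|lra].
Qed.

Ltac jlia := unfold jT, jX, jU, jV, jUt, jUx, jVt, jVx, jUtt, jUtx, jUxx, jVtt, jVtx, jVxx; lia.

Lemma Dx_lift_upd f p k s : k <> 0%nat -> k <> 1%nat -> k <> 2%nat -> k <> 3%nat -> k <> 5%nat -> k <> 7%nat ->
  Dx (lift f) (upd p k s) = Dx (lift f) p.
Proof. intros. rewrite !Dx_lift. unfold lift. rewrite !upd_j by jlia. reflexivity. Qed.

Lemma Dt_lift_upd f p k s : k <> 0%nat -> k <> 1%nat -> k <> 2%nat -> k <> 3%nat -> k <> 4%nat -> k <> 6%nat ->
  Dt (lift f) (upd p k s) = Dt (lift f) p.
Proof. intros. rewrite !Dt_lift. unfold lift. rewrite !upd_j by jlia. reflexivity. Qed.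

Definition LPHx := (0 :: 1 :: 2 :: 3 :: 4 :: 5 :: 7 :: nil)%nat.
Definition LCHx := (0 :: 1 :: 2 :: 3 :: 6 :: 5 :: 7 :: nil)%nat.
Definition LPHt := (0 :: 1 :: 2 :: 3 :: 4 :: 5 :: 6 :: nil)%nat.
Definition LCHt := (0 :: 1 :: 2 :: 3 :: 4 :: 6 :: 7 :: nil)%nat.

Ltac agree_rw H := unfold lift, jT, jX, jU, jV;
  rewrite ?(H 0%nat), ?(H 1%nat), ?(H 2%nat), ?(H 3%nat), ?(H 4%nat), ?(H 5%nat), ?(H 6%nat), ?(H 7%nat)
  by (simpl; tauto).

Lemma reads_PHx Q : reads LPHx (PHx Q).
Proof. intros p q H. unfold PHx, PH, TA, XI. rewrite !Dx_lift. unfold jUt, jUx, jVx. agree_rw H. reflexivity. Qed.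
Lemma reads_CHx Q : reads LCHx (CHx Q).
Proof. intros p q H. unfold CHx, CH, TA, XI. rewrite !Dx_lift. unfold jVt, jUx, jVx. agree_rw H. reflexivity. Qed.
Lemma reads_PHt Q : reads LPHt (PHt Q).
Proof. intros p q H. unfold PHt, PH, TA, XI. rewrite !Dt_lift. unfold jUt, jUx, jVt. agree_rw H. reflexivity. Qed.
Lemma reads_CHt Q : reads LCHt (CHt Q).
Proof. intros p q H. unfold CHt, CH, TA, XI. rewrite !Dt_lift. unfold jVt, jUt, jVx. agree_rw H. reflexivity. Qed.

Lemma pd_Ut_PHx Q p : pd jUt (PHx Q) p = - Dx (TA Q) p.
Proof. unfold pd. apply is_derive_unique.
  apply (is_derive_ext_R (fun s => (Dx (PH Q) p - p jUx * Dx (XI Q) p) - s * Dx (TA Q) p)).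
  - intro s. unfold PHx, PH, TA, XI. rewrite !Dx_lift_upd by jlia. rewrite upd_k, upd_j by jlia. ring.
  - auto_derive; auto; ring. Qed.

Lemma pd_Vt_CHx Q p : pd jVt (CHx Q) p = - Dx (TA Q) p.
Proof. unfold pd. apply is_derive_unique.
  apply (is_derive_ext_R (fun s => (Dx (CH Q) p - p jVx * Dx (XI Q) p) - s * Dx (TA Q) p)).
  - intro s. unfold CHx, CH, TA, XI. rewrite !Dx_lift_upd by jlia. rewrite upd_k, upd_j by jlia. ring.
  - auto_derive; auto; ring. Qed.

Ltac agree_tac := intros j Hj; simpl in Hj; repeat (destruct Hj as [<-|Hj]; [reflexivity|]); contradiction.

Ltac mkred_in H := cbv beta iota delta [mk lift jT jX jU jV jUt jUx jVt jVx jUtt jUtx jUxx jVtt jVtx jVxx] in H.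

Lemma PHxx_expand Q p : PHxx Q p = pd jX (PHx Q) p + p jUx * pd jU (PHx Q) p + p jVx * pd jV (PHx Q) p
  + p jUtx * pd jUt (PHx Q) p + p jUxx * pd jUx (PHx Q) p + p jVxx * pd jVx (PHx Q) p
  - p jUtx * Dx (TA Q) p - p jUxx * Dx (XI Q) p.
Proof. unfold PHxx. unfold Dx at 1.
  rewrite (pd_notread _ _ jVt _ (reads_PHx Q)) by (unfold LPHx; notin). ring. Qed.

Lemma CHxx_expand Q p : CHxx Q p = pd jX (CHx Q) p + p jUx * pd jU (CHx Q) p + p jVx * pd jV (CHx Q) p
  + p jVtx * pd jVt (CHx Q) p + p jUxx * pd jUx (CHx Q) p + p jVxx * pd jVx (CHx Q) p
  - p jVtx * Dx (TA Q) p - p jVxx * Dx (XI Q) p.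
Proof. unfold CHxx. unfold Dx at 1.
  rewrite (pd_notread _ _ jUt _ (reads_CHx Q)) by (unfold LCHx; notin). ring. Qed.

Lemma step2 gamma Q : SYM gamma Q ->
  forall t x u v ux vx, 0 < u ^ 2 + v ^ 2 ->
  dX (vf_tau Q) t x u v + ux * dU (vf_tau Q) t x u v + vx * dV (vf_tau Q) t x u v = 0.
Proof.
  intros HS t x u v ux vx Hd.
  set (R := Rof gamma u v).
  set (p0 := mk t x u v (- (R * v)) (R * u) ux vx 0 0 0).
  set (p1 := mk t x u v (- (R * v)) (R * u) ux vx 0 0 1).
  assert (Hd0 : dom p0) by (unfold dom, p0; mkred; exact Hd).
  assert (Hd1 : dom p1) by (unfold dom, p1; mkred; exact Hd).
  destruct (sym_aff gamma Q 0 0 0 0 p0 HS Hd0) as [A0 _].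
  { unfold NLS_re, rho, aff, p0; mkred; fold (Rof gamma u v); fold R; ring. }
  { unfold NLS_im, rho, aff, p0; mkred; fold (Rof gamma u v); fold R; ring. }
  destruct (sym_aff gamma Q 0 0 0 0 p1 HS Hd1) as [A1 _].
  { unfold NLS_re, rho, aff, p1; mkred; fold (Rof gamma u v); fold R; ring. }
  { unfold NLS_im, rho, aff, p1; mkred; fold (Rof gamma u v); fold R; ring. }
  rewrite E_re in A0, A1 by assumption. rewrite pd_re_X_aff in A0, A1.
  assert (HC : CHt Q p1 = CHt Q p0) by (apply (reads_CHt Q); agree_tac).
  rewrite HC in A1.
  rewrite PHxx_expand in A0, A1.
  rewrite (pd_reads LPHx _ jX p1 p0 (reads_PHx Q)), (pd_reads LPHx _ jU p1 p0 (reads_PHx Q)),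
    (pd_reads LPHx _ jV p1 p0 (reads_PHx Q)), (pd_reads LPHx _ jUt p1 p0 (reads_PHx Q)),
    (pd_reads LPHx _ jUx p1 p0 (reads_PHx Q)), (pd_reads LPHx _ jVx p1 p0 (reads_PHx Q)) in A1
    by (try agree_tac; reflexivity).
  rewrite pd_Ut_PHx in A0, A1.
  unfold TA, XI in A0, A1. rewrite !Dx_lift in A0, A1.
  unfold PH, CH, RU, RV, rr, rho, p1, p0 in A0, A1. mkred_in A0. mkred_in A1.
  pose proof (f_equal2 Rminus A1 A0) as D. ring_simplify in D. lra.
Qed.

Lemma dom_mk t x u v ut vt ux vx uxx vxx utx :
  dom (mk t x u v ut vt ux vx uxx vxx utx) <-> 0 < u ^ 2 + v ^ 2.
Proof. unfold dom; mkred; tauto. Qed.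

Lemma dU_ext_dom f g t x u v :
  (forall s, 0 < s ^ 2 + v ^ 2 -> f t x s v = g t x s v) -> 0 < u ^ 2 + v ^ 2 ->
  dU f t x u v = dU g t x u v.
Proof. intros H Hd. unfold dU. apply Derive_ext_loc.
  pose proof (locally_dom (mk t x u v 0 0 0 0 0 0 0) jU) as L.
  specialize (L (proj2 (dom_mk t x u v 0 0 0 0 0 0 0) Hd)).
  eapply filter_imp; [|exact L]. intros s Hs. apply H.
  unfold dom, upd in Hs; mkred_in Hs. exact Hs. Qed.

Lemma dV_ext_dom f g t x u v :
  (forall s, 0 < u ^ 2 + s ^ 2 -> f t x u s = g t x u s) -> 0 < u ^ 2 + v ^ 2 ->
  dV f t x u v = dV g t x u v.
Proof. intros H Hd. unfold dV. apply Derive_ext_loc.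
  pose proof (locally_dom (mk t x u v 0 0 0 0 0 0 0) jV) as L.
  specialize (L (proj2 (dom_mk t x u v 0 0 0 0 0 0 0) Hd)).
  eapply filter_imp; [|exact L]. intros s Hs. apply H.
  unfold dom, upd in Hs; mkred_in Hs. exact Hs. Qed.

Lemma dT_ext f g t x u v : (forall s, f s x u v = g s x u v) -> dT f t x u v = dT g t x u v.
Proof. intro H; unfold dT; apply Derive_ext; exact H. Qed.
Lemma dX_ext f g t x u v : (forall s, f t s u v = g t s u v) -> dX f t x u v = dX g t x u v.
Proof. intro H; unfold dX; apply Derive_ext; exact H. Qed.

Definition domR (u v : R) := 0 < u ^ 2 + v ^ 2.

Lemma zero_partials f : (forall t x u v, domR u v -> f t x u v = 0) ->
  forall t x u v, domR u v ->
  dT f t x u v = 0 /\ dX f t x u v = 0 /\ dU f t x u v = 0 /\ dV f t x u v = 0.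
Proof. intros H t x u v Hd. repeat split.
  - rewrite (dT_ext f (fun _ _ _ _ => 0)) by (intro; apply H; exact Hd). unfold dT, dX; apply Derive_const.
  - rewrite (dX_ext f (fun _ _ _ _ => 0)) by (intro; apply H; exact Hd). unfold dT, dX; apply Derive_const.
  - rewrite (dU_ext_dom f (fun _ _ _ _ => 0)) by (auto; intros; apply H; auto). unfold dU, dV; apply Derive_const.
  - rewrite (dV_ext_dom f (fun _ _ _ _ => 0)) by (auto; intros; apply H; auto). unfold dU, dV; apply Derive_const.
Qed.

Definition smoothQ (Q : vfield) := smooth_vfield Q.

Lemma ex0 f p k : smooth_on 4 dom (lift f) -> (k < 4)%nat -> dom p ->
  ex_derive (fun s => lift f (upd p k s)) (p k).
Proof. intros H Hk Hd. exact (H nil k p (Forall_nil _) Hk Hd). Qed.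

Lemma ex1 f p k (i : nat) : smooth_on 4 dom (lift f) -> (i < 4)%nat -> (k < 4)%nat -> dom p ->
  ex_derive (fun s => pd i (lift f) (upd p k s)) (p k).
Proof. intros H Hi Hk Hd. exact (H (i :: nil) k p (Forall_cons (P := fun i : nat => (i < 4)%nat) i Hi (Forall_nil _)) Hk Hd). Qed.

Lemma pd_lin3 k p (A B C : jet -> R) : (k < 4)%nat ->
  ex_derive (fun s => A (upd p k s)) (p k) -> ex_derive (fun s => B (upd p k s)) (p k) ->
  ex_derive (fun s => C (upd p k s)) (p k) ->
  pd k (fun q => A q + q jUx * B q + q jVx * C q) p = pd k A p + p jUx * pd k B p + p jVx * pd k C p.
Proof. intros Hk HA HB HC. unfold pd.
  rewrite (Derive_ext _ (fun s => A (upd p k s) + p jUx * B (upd p k s) + p jVx * C (upd p k s))).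
  2:{ intro s. rewrite !(upd_j p k s) by (unfold jUx, jVx; lia). reflexivity. }
  rewrite Derive_plus; [|apply ex_derive_plus_R; [auto|apply ex_derive_scal_R; auto]|apply ex_derive_scal_R; auto].
  rewrite Derive_plus; [|auto|apply ex_derive_scal_R; auto].
  rewrite !Derive_scal. reflexivity. Qed.

Lemma pd_lin3_Ux p (A B C : jet -> R) :
  reads (0 :: 1 :: 2 :: 3 :: nil)%nat A -> reads (0 :: 1 :: 2 :: 3 :: nil)%nat B ->
  reads (0 :: 1 :: 2 :: 3 :: nil)%nat C ->
  pd jUx (fun q => A q + q jUx * B q + q jVx * C q) p = B p.
Proof. intros HA HB HC. unfold pd. apply is_derive_unique.
  apply (is_derive_ext_R (fun s => A p + s * B p + p jVx * C p)).
  - intro s. rewrite (HA (upd p jUx s) p), (HB (upd p jUx s) p), (HC (upd p jUx s) p)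
      by (intros j Hj; apply upd_j; simpl in Hj; unfold jUx; intuition lia).
    rewrite upd_k, upd_j by (unfold jUx, jVx; lia). reflexivity.
  - auto_derive; auto; ring. Qed.

Lemma pd_lin3_Vx p (A B C : jet -> R) :
  reads (0 :: 1 :: 2 :: 3 :: nil)%nat A -> reads (0 :: 1 :: 2 :: 3 :: nil)%nat B ->
  reads (0 :: 1 :: 2 :: 3 :: nil)%nat C ->
  pd jVx (fun q => A q + q jUx * B q + q jVx * C q) p = C p.
Proof. intros HA HB HC. unfold pd. apply is_derive_unique.
  apply (is_derive_ext_R (fun s => A p + p jUx * B p + s * C p)).
  - intro s. rewrite (HA (upd p jVx s) p), (HB (upd p jVx s) p), (HC (upd p jVx s) p)
      by (intros j Hj; apply upd_j; simpl in Hj; unfold jVx; intuition lia).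
    rewrite upd_k, upd_j by (unfold jUx, jVx; lia). reflexivity.
  - auto_derive; auto; ring. Qed.

Lemma reads_lift f : reads (0 :: 1 :: 2 :: 3 :: nil)%nat (lift f).
Proof. intros p q H. unfold lift, jT, jX, jU, jV. rewrite (H 0%nat), (H 1%nat), (H 2%nat), (H 3%nat) by (simpl; tauto).
  reflexivity. Qed.

Definition Facts (Q : vfield) := forall t x u v, domR u v ->
  vf_xi Q t x u v = 0 /\ dX (vf_tau Q) t x u v = 0 /\ dU (vf_tau Q) t x u v = 0 /\ dV (vf_tau Q) t x u v = 0.

Lemma facts_xi Q : Facts Q -> forall t x u v, domR u v ->
  dT (vf_xi Q) t x u v = 0 /\ dX (vf_xi Q) t x u v = 0 /\ dU (vf_xi Q) t x u v = 0 /\ dV (vf_xi Q) t x u v = 0.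
Proof. intros HF. apply zero_partials. intros; apply HF; auto. Qed.

Ltac use_facts HF p :=
  let Hd := fresh in
  assert (Hd : domR (p jU) (p jV)) by assumption;
  destruct (HF _ (p jX) _ _ Hd) as (?&?&?&?) ;
  destruct (facts_xi _ HF (p jT) (p jX) _ _ Hd) as (?&?&?&?).

Lemma M_CHt Q p : Facts Q -> dom p ->
  CHt Q p = lift (dT (vf_chi Q)) p + p jUt * lift (dU (vf_chi Q)) p + p jVt * lift (dV (vf_chi Q)) p
            - p jVt * lift (dT (vf_tau Q)) p.
Proof. intros HF Hd. unfold CHt, CH, TA, XI. rewrite !Dt_lift. unfold lift.
  destruct (HF (p jT) (p jX) (p jU) (p jV) Hd) as (_&_&H3&H4).
  destruct (facts_xi _ HF (p jT) (p jX) _ _ Hd) as (H5&_&H7&H8).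
  rewrite H3, H4, H5, H7, H8. ring. Qed.

Lemma M_PHt Q p : Facts Q -> dom p ->
  PHt Q p = lift (dT (vf_phi Q)) p + p jUt * lift (dU (vf_phi Q)) p + p jVt * lift (dV (vf_phi Q)) p
            - p jUt * lift (dT (vf_tau Q)) p.
Proof. intros HF Hd. unfold PHt, PH, TA, XI. rewrite !Dt_lift. unfold lift.
  destruct (HF (p jT) (p jX) (p jU) (p jV) Hd) as (_&_&H3&H4).
  destruct (facts_xi _ HF (p jT) (p jX) _ _ Hd) as (H5&_&H7&H8).
  rewrite H3, H4, H5, H7, H8. ring. Qed.

Lemma M_DxTA Q p : Facts Q -> dom p -> Dx (TA Q) p = 0.
Proof. intros HF Hd. unfold TA. rewrite Dx_lift. unfold lift.
  destruct (HF (p jT) (p jX) (p jU) (p jV) Hd) as (_&H2&H3&H4). rewrite H2, H3, H4. ring. Qed.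
Lemma M_DxXI Q p : Facts Q -> dom p -> Dx (XI Q) p = 0.
Proof. intros HF Hd. unfold XI. rewrite Dx_lift. unfold lift.
  destruct (facts_xi _ HF (p jT) (p jX) _ _ Hd) as (_&H2&H3&H4). rewrite H2, H3, H4. ring. Qed.

Lemma M_PHx Q q : Facts Q -> dom q ->
  PHx Q q = lift (dX (vf_phi Q)) q + q jUx * lift (dU (vf_phi Q)) q + q jVx * lift (dV (vf_phi Q)) q.
Proof. intros HF Hd. unfold PHx. rewrite (M_DxTA Q q HF Hd), (M_DxXI Q q HF Hd). unfold PH. rewrite Dx_lift. ring. Qed.
Lemma M_CHx Q q : Facts Q -> dom q ->
  CHx Q q = lift (dX (vf_chi Q)) q + q jUx * lift (dU (vf_chi Q)) q + q jVx * lift (dV (vf_chi Q)) q.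
Proof. intros HF Hd. unfold CHx. rewrite (M_DxTA Q q HF Hd), (M_DxXI Q q HF Hd). unfold CH. rewrite Dx_lift. ring. Qed.

Definition Mxx (f : R -> R -> R -> R -> R) (p : jet) :=
  lift (dX (dX f)) p + p jUx * lift (dX (dU f)) p + p jVx * lift (dX (dV f)) p
  + p jUx * (lift (dU (dX f)) p + p jUx * lift (dU (dU f)) p + p jVx * lift (dU (dV f)) p)
  + p jVx * (lift (dV (dX f)) p + p jUx * lift (dV (dU f)) p + p jVx * lift (dV (dV f)) p)
  + p jUxx * lift (dU f) p + p jVxx * lift (dV f) p.

Lemma pd_Dx3 f p k : smooth_on 4 dom (lift f) -> dom p -> (k < 4)%nat ->
  pd k (fun q => lift (dX f) q + q jUx * lift (dU f) q + q jVx * lift (dV f) q) p =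
  pd k (lift (dX f)) p + p jUx * pd k (lift (dU f)) p + p jVx * pd k (lift (dV f)) p.
Proof. intros Hs Hd Hk. apply pd_lin3; auto.
  - exact (ex1 f p k jX Hs ltac:(unfold jX; lia) Hk Hd).
  - exact (ex1 f p k jU Hs ltac:(unfold jU; lia) Hk Hd).
  - exact (ex1 f p k jV Hs ltac:(unfold jV; lia) Hk Hd). Qed.

Lemma M_PHxx Q p : Facts Q -> smooth_vfield Q -> dom p -> PHxx Q p = Mxx (vf_phi Q) p.
Proof. intros HF HS Hd. destruct HS as (_&_&Hs&_).
  rewrite PHxx_expand. rewrite (M_DxTA Q p HF Hd), (M_DxXI Q p HF Hd), pd_Ut_PHx, (M_DxTA Q p HF Hd).
  rewrite !(pd_ext_dom (PHx Q) (fun q => lift (dX (vf_phi Q)) q + q jUx * lift (dU (vf_phi Q)) q + q jVx * lift (dV (vf_phi Q)) q))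
    by (auto; intros; apply M_PHx; auto).
  rewrite pd_lin3_Ux, pd_lin3_Vx by apply reads_lift.
  rewrite !pd_Dx3 by (auto; unfold jX, jU, jV; lia).
  rewrite !pd_lift_X, !pd_lift_U, !pd_lift_V. unfold Mxx. ring. Qed.

Lemma M_CHxx Q p : Facts Q -> smooth_vfield Q -> dom p -> CHxx Q p = Mxx (vf_chi Q) p.
Proof. intros HF HS Hd. destruct HS as (_&_&_&Hs).
  rewrite CHxx_expand. rewrite (M_DxTA Q p HF Hd), (M_DxXI Q p HF Hd), pd_Vt_CHx, (M_DxTA Q p HF Hd).
  rewrite !(pd_ext_dom (CHx Q) (fun q => lift (dX (vf_chi Q)) q + q jUx * lift (dU (vf_chi Q)) q + q jVx * lift (dV (vf_chi Q)) q))
    by (auto; intros; apply M_CHx; auto).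
  rewrite pd_lin3_Ux, pd_lin3_Vx by apply reads_lift.
  rewrite !pd_Dx3 by (auto; unfold jX, jU, jV; lia).
  rewrite !pd_lift_X, !pd_lift_U, !pd_lift_V. unfold Mxx. ring. Qed.

Lemma Ere_m Q gamma a b p : Facts Q -> smooth_vfield Q -> dom p ->
  pr2 Q (NLS_re gamma a b) p =
    lift (vf_phi Q) p * (RU gamma p * p jU + rho gamma p + a (p jX))
  + lift (vf_chi Q) p * (RV gamma p * p jU - b (p jX))
  - (lift (dT (vf_chi Q)) p + p jUt * lift (dU (vf_chi Q)) p + p jVt * lift (dV (vf_chi Q)) p
     - p jVt * lift (dT (vf_tau Q)) p)
  + Mxx (vf_phi Q) p.
Proof. intros HF HS Hd. rewrite E_re by exact Hd.
  rewrite M_CHt, M_PHxx by assumption.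
  assert (XI Q p = 0) by (apply (HF (p jT) (p jX) (p jU) (p jV) Hd)).
  rewrite H. unfold PH, CH. ring. Qed.

Lemma Eim_m Q gamma a b p : Facts Q -> smooth_vfield Q -> dom p ->
  pr2 Q (NLS_im gamma a b) p =
    lift (vf_phi Q) p * (RU gamma p * p jV + b (p jX))
  + lift (vf_chi Q) p * (RV gamma p * p jV + rho gamma p + a (p jX))
  + (lift (dT (vf_phi Q)) p + p jUt * lift (dU (vf_phi Q)) p + p jVt * lift (dV (vf_phi Q)) p
     - p jUt * lift (dT (vf_tau Q)) p)
  + Mxx (vf_chi Q) p.
Proof. intros HF HS Hd. rewrite E_im by exact Hd.
  rewrite M_PHt, M_CHxx by assumption.
  assert (XI Q p = 0) by (apply (HF (p jT) (p jX) (p jU) (p jV) Hd)).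
  rewrite H. unfold PH, CH. ring. Qed.

Lemma facts_of_sym gamma Q : SYM gamma Q -> Facts Q.
Proof. intros HS t x u v Hd. split; [apply (step1 gamma Q HS); exact Hd|].
  pose proof (step2 gamma Q HS t x u v 0 0 Hd) as A.
  pose proof (step2 gamma Q HS t x u v 1 0 Hd) as B.
  pose proof (step2 gamma Q HS t x u v 0 1 Hd) as C.
  lra. Qed.

Lemma step3 gamma Q : SYM gamma Q -> smooth_vfield Q ->
  forall t x u v, domR u v ->
  let ph := vf_phi Q t x u v in let ch := vf_chi Q t x u v in let r := u ^ 2 + v ^ 2 in
  let tT := dT (vf_tau Q) t x u v in
  u * ph + v * ch = r * (dV (vf_chi Q) t x u v - tT) /\
  u * ch - v * ph = - r * dV (vf_phi Q) t x u v /\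
  v * ph - u * ch = - r * dU (vf_chi Q) t x u v /\
  u * ph + v * ch = r * (dU (vf_phi Q) t x u v - tT).
Proof.
  intros HS Hsm t x u v Hd. intros ph ch r tT.
  pose proof (facts_of_sym gamma Q HS) as HF.
  set (R := Rof gamma u v).
  set (p0 := mk t x u v (- (R * v)) (R * u) 0 0 0 0 0).
  set (p1 := mk t x u v (- (R * v)) (R * u + r) 0 0 0 0 0).
  set (p2 := mk t x u v (- (R * v) - r) (R * u) 0 0 0 0 0).
  assert (Hd0 : dom p0) by (unfold dom, p0; mkred; exact Hd).
  assert (Hd1 : dom p1) by (unfold dom, p1; mkred; exact Hd).
  assert (Hd2 : dom p2) by (unfold dom, p2; mkred; exact Hd).
  destruct (sym_aff gamma Q 0 0 0 0 p0 HS Hd0) as [A0 B0].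
  { unfold NLS_re, rho, aff, p0; mkred; fold (Rof gamma u v); fold R; ring. }
  { unfold NLS_im, rho, aff, p0; mkred; fold (Rof gamma u v); fold R; ring. }
  destruct (sym_aff gamma Q 0 u 0 (- v) p1 HS Hd1) as [A1 B1].
  { unfold NLS_re, rho, aff, p1, r; mkred; fold (Rof gamma u v); fold R; ring. }
  { unfold NLS_im, rho, aff, p1, r; mkred; fold (Rof gamma u v); fold R; ring. }
  destruct (sym_aff gamma Q 0 v 0 u p2 HS Hd2) as [A2 B2].
  { unfold NLS_re, rho, aff, p2, r; mkred; fold (Rof gamma u v); fold R; ring. }
  { unfold NLS_im, rho, aff, p2, r; mkred; fold (Rof gamma u v); fold R; ring. }
  rewrite Ere_m in A0, A1, A2 by assumption.
  rewrite Eim_m in B0, B1, B2 by assumption.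
  unfold Mxx, RU, RV, rr, rho, aff, p0, p1, p2 in *. mkred_in A0. mkred_in A1. mkred_in A2.
  mkred_in B0. mkred_in B1. mkred_in B2.
  unfold ph, ch, tT, r in *.
  pose proof (f_equal2 Rminus A1 A0) as D1. ring_simplify in D1.
  pose proof (f_equal2 Rminus B1 B0) as D2. ring_simplify in D2.
  pose proof (f_equal2 Rminus A2 A0) as D3. ring_simplify in D3.
  pose proof (f_equal2 Rminus B2 B0) as D4. ring_simplify in D4.
  repeat split; lra.
Qed.

Lemma lin_partials f al be c : (forall t x u v, domR u v -> f t x u v = al * u + be * v + c) ->
  forall t x u v, domR u v ->
  dT f t x u v = 0 /\ dX f t x u v = 0 /\ dU f t x u v = al /\ dV f t x u v = be.
Proof. intros H t x u v Hd. repeat split.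
  - rewrite (dT_ext f (fun _ _ u v => al * u + be * v + c)) by (intro; apply H; exact Hd).
    unfold dT; apply Derive_const.
  - rewrite (dX_ext f (fun _ _ u v => al * u + be * v + c)) by (intro; apply H; exact Hd).
    unfold dX; apply Derive_const.
  - rewrite (dU_ext_dom f (fun _ _ u v => al * u + be * v + c)) by (auto; intros; apply H; auto).
    unfold dU. apply is_derive_unique. auto_derive; auto; ring.
  - rewrite (dV_ext_dom f (fun _ _ u v => al * u + be * v + c)) by (auto; intros; apply H; auto).
    unfold dV. apply is_derive_unique. auto_derive; auto; ring.
Qed.

Lemma RU_RV gamma p : RU gamma p * p jV = RV gamma p * p jU.
Proof. unfold RU, RV, Rdiv. ring. Qed.

Lemma converse gamma Q : smooth_vfield Q -> in_span_M_Dt Q ->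
  forall a b, is_lie_symmetry gamma a b Q.
Proof.
  intros HS [c1 [c2 Hsp]] a b p Hd Hre Him.
  assert (Htau : forall t x u v, domR u v -> vf_tau Q t x u v = 0 * u + 0 * v + c2)
    by (intros; rewrite (proj1 (Hsp _ _ _ _ H)); ring).
  assert (Hphi : forall t x u v, domR u v -> vf_phi Q t x u v = 0 * u + (- c1) * v + 0)
    by (intros; rewrite (proj1 (proj2 (proj2 (Hsp _ _ _ _ H)))); ring).
  assert (Hchi : forall t x u v, domR u v -> vf_chi Q t x u v = c1 * u + 0 * v + 0)
    by (intros; rewrite (proj2 (proj2 (proj2 (Hsp _ _ _ _ H)))); ring).
  assert (HF : Facts Q).
  { intros t x u v H. destruct (lin_partials _ _ _ _ Htau t x u v H) as (_&A&B&C).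
    split; [apply (Hsp _ _ _ _ H)|]. rewrite A, B, C. auto. }
  pose proof (lin_partials _ _ _ _ Htau) as Pt.
  pose proof (lin_partials _ _ _ _ Hphi) as Pp.
  pose proof (lin_partials _ _ _ _ Hchi) as Pc.
  assert (PX : forall t x u v, domR u v -> dX (vf_phi Q) t x u v = 0 * u + 0 * v + 0)
    by (intros; rewrite (proj1 (proj2 (Pp _ _ _ _ H))); ring).
  assert (PU : forall t x u v, domR u v -> dU (vf_phi Q) t x u v = 0 * u + 0 * v + 0)
    by (intros; rewrite (proj1 (proj2 (proj2 (Pp _ _ _ _ H)))); ring).
  assert (PV : forall t x u v, domR u v -> dV (vf_phi Q) t x u v = 0 * u + 0 * v + - c1)
    by (intros; rewrite (proj2 (proj2 (proj2 (Pp _ _ _ _ H)))); ring).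
  assert (CX : forall t x u v, domR u v -> dX (vf_chi Q) t x u v = 0 * u + 0 * v + 0)
    by (intros; rewrite (proj1 (proj2 (Pc _ _ _ _ H))); ring).
  assert (CU : forall t x u v, domR u v -> dU (vf_chi Q) t x u v = 0 * u + 0 * v + c1)
    by (intros; rewrite (proj1 (proj2 (proj2 (Pc _ _ _ _ H)))); ring).
  assert (CV : forall t x u v, domR u v -> dV (vf_chi Q) t x u v = 0 * u + 0 * v + 0)
    by (intros; rewrite (proj2 (proj2 (proj2 (Pc _ _ _ _ H)))); ring).
  pose proof (lin_partials _ _ _ _ PX) as PXX. pose proof (lin_partials _ _ _ _ PU) as PUU.
  pose proof (lin_partials _ _ _ _ PV) as PVV. pose proof (lin_partials _ _ _ _ CX) as CXX.
  pose proof (lin_partials _ _ _ _ CU) as CUU. pose proof (lin_partials _ _ _ _ CV) as CVV.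
  unfold dom in Hd. fold (domR (p jU) (p jV)) in Hd.
  set (t := p jT) in *. set (x := p jX) in *. set (u := p jU) in *. set (v := p jV) in *.
  destruct (Pt t x u v Hd) as (T1&_&_&_).
  destruct (Pp t x u v Hd) as (P1&P2&P3&P4).
  destruct (Pc t x u v Hd) as (C1&C2&C3&C4).
  destruct (PXX t x u v Hd) as (_&Q1&Q2&Q3).
  destruct (PUU t x u v Hd) as (_&Q4&Q5&Q6).
  destruct (PVV t x u v Hd) as (_&Q7&Q8&Q9).
  destruct (CXX t x u v Hd) as (_&R1&R2&R3).
  destruct (CUU t x u v Hd) as (_&R4&R5&R6).
  destruct (CVV t x u v Hd) as (_&R7&R8&R9).
  assert (Hd' : dom p) by exact Hd.
  split.
  - rewrite Ere_m by assumption. unfold Mxx, lift. fold t x u v.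
    rewrite T1, C1, C3, C4, P3, P4, Q1, Q2, Q3, Q4, Q5, Q6, Q7, Q8, Q9.
    rewrite (proj1 (proj2 (proj2 (Hsp _ _ _ _ Hd)))), (proj2 (proj2 (proj2 (Hsp _ _ _ _ Hd)))).
    pose proof (RU_RV gamma p) as HRR. fold u v in HRR.
    unfold NLS_im in Him. fold u v x in Him.
    transitivity (- c1 * u * (RU gamma p * v - RV gamma p * u)
       - c1 * (p jUt + p jVxx + rho gamma p * v + a x * v + b x * u)); [ring|].
    rewrite Him, HRR. ring.
  - rewrite Eim_m by assumption. unfold Mxx, lift. fold t x u v.
    rewrite T1, P1, P3, P4, C3, C4, R1, R2, R3, R4, R5, R6, R7, R8, R9.
    rewrite (proj1 (proj2 (proj2 (Hsp _ _ _ _ Hd)))), (proj2 (proj2 (proj2 (Hsp _ _ _ _ Hd)))).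
    pose proof (RU_RV gamma p) as HRR. fold u v in HRR.
    unfold NLS_re in Hre. fold u v x in Hre.
    transitivity (- c1 * v * (RU gamma p * v - RV gamma p * u)
       + c1 * (- p jVt + p jUxx + rho gamma p * u + a x * u - b x * v)); [ring|].
    rewrite Hre, HRR. ring.
Qed.

Lemma const_line (g : R -> R) (P : R -> Prop) a b :
  (forall y, Rmin a b <= y <= Rmax a b -> P y) -> (forall y, P y -> is_derive g y 0) -> g a = g b.
Proof. intros H1 H2. apply zero_deriv_eq. intros; apply H2, H1; auto. Qed.

Lemma conn2 (f : R -> R -> R) :
  (forall u v, domR u v -> is_derive (fun s => f s v) u 0 /\ is_derive (fun s => f u s) v 0) ->
  forall u v, domR u v -> f u v = f 1 0.
Proof.
  intros H u v Hd. unfold domR in *.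
  assert (HU : forall v0 a b, v0 <> 0 -> f a v0 = f b v0).
  { intros v0 a b Hv. pose proof (const_line (fun s => f s v0) (fun _ => True) a b) as K.
    apply K; [intros; exact I|]. intros y _.
    assert (Hy : 0 < y ^ 2 + v0 ^ 2).
    { assert (0 < v0 ^ 2) by (apply pow2_gt_0; auto). assert (0 <= y ^ 2) by apply pow2_ge_0. lra. }
    exact (proj1 (H y v0 Hy)). }
  assert (HV : forall u0 a b, u0 <> 0 -> f u0 a = f u0 b).
  { intros u0 a b Hu. pose proof (const_line (fun s => f u0 s) (fun _ => True) a b) as K.
    apply K; [intros; exact I|]. intros y _.
    assert (Hy : 0 < u0 ^ 2 + y ^ 2).
    { assert (0 < u0 ^ 2) by (apply pow2_gt_0; auto). assert (0 <= y ^ 2) by apply pow2_ge_0. lra. }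
    exact (proj2 (H u0 y Hy)). }
  destruct (Req_dec v 0) as [Hv|Hv].
  - rewrite Hv in *. assert (Hu : u <> 0).
    { intro Hu0; rewrite Hu0 in Hd. replace (0 ^ 2 + 0 ^ 2) with 0 in Hd by ring. lra. }
    destruct (Rlt_or_le 0 u) as [Hp|Hn].
    + pose proof (const_line (fun s => f s 0) (fun y => 0 < y) u 1) as K. apply K.
      * intros y Hy. unfold Rmin, Rmax in Hy. destruct (Rle_dec u 1); lra.
      * intros y Hy. assert (Hy2 : 0 < y ^ 2 + 0 ^ 2).
        { assert (0 < y ^ 2) by (apply pow2_gt_0; lra). replace (0 ^ 2) with 0 by ring. lra. }
        exact (proj1 (H y 0 Hy2)).
    + rewrite (HV u 0 1) by auto. rewrite (HU 1 u 1) by lra. apply HV; lra.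
  - rewrite (HU v u 1) by auto. apply HV; lra.
Qed.

Lemma exT f t x u v : smooth_on 4 dom (lift f) -> domR u v -> ex_derive (fun s => f s x u v) t.
Proof. intros H Hd. exact (ex0 f (mk t x u v 0 0 0 0 0 0 0) jT H ltac:(unfold jT; lia) Hd). Qed.
Lemma exX f t x u v : smooth_on 4 dom (lift f) -> domR u v -> ex_derive (fun s => f t s u v) x.
Proof. intros H Hd. exact (ex0 f (mk t x u v 0 0 0 0 0 0 0) jX H ltac:(unfold jX; lia) Hd). Qed.
Lemma exU f t x u v : smooth_on 4 dom (lift f) -> domR u v -> ex_derive (fun s => f t x s v) u.
Proof. intros H Hd. exact (ex0 f (mk t x u v 0 0 0 0 0 0 0) jU H ltac:(unfold jU; lia) Hd). Qed.
Lemma exV f t x u v : smooth_on 4 dom (lift f) -> domR u v -> ex_derive (fun s => f t x u s) v.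
Proof. intros H Hd. exact (ex0 f (mk t x u v 0 0 0 0 0 0 0) jV H ltac:(unfold jV; lia) Hd). Qed.

Lemma isdU f t x u v : smooth_on 4 dom (lift f) -> domR u v ->
  is_derive (fun s => f t x s v) u (dU f t x u v).
Proof. intros; apply Derive_correct; apply exU; auto. Qed.
Lemma isdV f t x u v : smooth_on 4 dom (lift f) -> domR u v ->
  is_derive (fun s => f t x u s) v (dV f t x u v).
Proof. intros; apply Derive_correct; apply exV; auto. Qed.
Lemma isdT f t x u v : smooth_on 4 dom (lift f) -> domR u v ->
  is_derive (fun s => f s x u v) t (dT f t x u v).
Proof. intros; apply Derive_correct; apply exT; auto. Qed.
Lemma isdX f t x u v : smooth_on 4 dom (lift f) -> domR u v ->
  is_derive (fun s => f t s u v) x (dX f t x u v).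
Proof. intros; apply Derive_correct; apply exX; auto. Qed.

Lemma is_derive_zero_of (g : R -> R) y : ex_derive g y -> Derive g y = 0 -> is_derive g y 0.
Proof. intros H1 H2. rewrite <- H2. apply Derive_correct, H1. Qed.

Lemma isd_quot_ln (f : R -> R) s df T : 0 < s -> is_derive f s df ->
  is_derive (fun y => f y / y - T * ln y) s ((df * s - f s) / s ^ 2 - T / s).
Proof. intros Hs Hf.
  assert (E : Derive (fun x => f x) s = df) by (apply is_derive_unique; exact Hf).
  auto_derive.
  - repeat split; try lra. exists df; exact Hf.
  - rewrite E. field. lra.
Qed.

Lemma d0 y : 0 < y -> domR y 0.
Proof. intro H; unfold domR. assert (0 < y ^ 2) by (apply pow2_gt_0; lra). replace (0 ^ 2) with 0 by ring. lra. Qed.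
Lemma d10 : domR 1 0.
Proof. apply d0; lra. Qed.

Lemma pos_seg y P : 0 < y -> (forall s, 0 < s -> P s) -> forall s, Rmin y 1 <= s <= Rmax y 1 -> P s.
Proof. intros Hy H s Hs. apply H. unfold Rmin, Rmax in Hs. destruct (Rle_dec y 1); lra. Qed.
Lemma pos_seg' y P : 0 < y -> (forall s, 0 < s -> P s) -> forall s, Rmin 1 y <= s <= Rmax 1 y -> P s.
Proof. intros Hy H s Hs. apply H. unfold Rmin, Rmax in Hs. destruct (Rle_dec 1 y); lra. Qed.

Lemma s4_tau_axis gamma Q : SYM gamma Q -> smooth_vfield Q ->
  forall t x y, 0 < y -> vf_tau Q t x y 0 = vf_tau Q t x 1 0.
Proof. intros HS (Hst&_&_&_) t x y Hy. pose proof (facts_of_sym _ _ HS) as HF.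
  apply (const_line (fun s => vf_tau Q t x s 0) (fun s => 0 < s)).
  - apply pos_seg; auto.
  - intros s Hs. apply is_derive_zero_of; [apply exU; auto; apply d0; auto|].
    exact (proj1 (proj2 (proj2 (HF t x s 0 (d0 s Hs))))). Qed.

Lemma s4_tau_x gamma Q : SYM gamma Q -> smooth_vfield Q ->
  forall t x' x, vf_tau Q t x' 1 0 = vf_tau Q t x 1 0.
Proof. intros HS (Hst&_&_&_) t x' x. pose proof (facts_of_sym _ _ HS) as HF.
  apply (const_line (fun s => vf_tau Q t s 1 0) (fun _ => True)); [intros; exact I|].
  intros s _. apply is_derive_zero_of; [apply exX; auto; apply d10|].
  exact (proj1 (proj2 (HF t s 1 0 d10))). Qed.

Lemma s4_tauT gamma Q : SYM gamma Q -> smooth_vfield Q ->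
  forall t x x' y, 0 < y -> dT (vf_tau Q) t x' y 0 = dT (vf_tau Q) t x 1 0.
Proof. intros HS Hsm t x x' y Hy. unfold dT. apply Derive_ext. intro s.
  rewrite (s4_tau_axis gamma Q HS Hsm s x' y Hy). apply (s4_tau_x gamma Q HS Hsm). Qed.

Lemma s4_phi gamma Q : SYM gamma Q -> smooth_vfield Q ->
  forall t x y, 0 < y -> vf_phi Q t x y 0 = y * vf_phi Q t x 1 0 + y * dT (vf_tau Q) t x 1 0 * ln y.
Proof. intros HS Hsm t x y Hy. pose proof Hsm as (_&_&Hsp&_).
  set (T := dT (vf_tau Q) t x 1 0).
  assert (K : (fun s => vf_phi Q t x s 0 / s - T * ln s) 1 = (fun s => vf_phi Q t x s 0 / s - T * ln s) y).
  { refine (const_line (fun s => vf_phi Q t x s 0 / s - T * ln s) (fun s => 0 < s) 1 y _ _); [apply pos_seg'; auto|].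
    intros s Hs. pose proof (isd_quot_ln (fun s => vf_phi Q t x s 0) s (dU (vf_phi Q) t x s 0) T Hs
       (isdU _ _ _ _ _ Hsp (d0 s Hs))) as D.
    destruct (step3 gamma Q HS Hsm t x s 0 (d0 s Hs)) as (_&_&_&P6). cbv zeta in P6.
    rewrite (s4_tauT gamma Q HS Hsm t x x s Hs) in P6. fold T in P6.
    enough (Z : (dU (vf_phi Q) t x s 0 * s - vf_phi Q t x s 0) / s ^ 2 - T / s = 0) by (cbv beta in D; rewrite Z in D; exact D).
    assert (E : vf_phi Q t x s 0 = s * (dU (vf_phi Q) t x s 0 - T)).
    { apply (Rmult_eq_reg_l s); [|lra]. replace (s * vf_phi Q t x s 0) with
        (s * vf_phi Q t x s 0 + 0 * vf_chi Q t x s 0) by ring. rewrite P6. ring. }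
    rewrite E. field. lra. }
  simpl in K. rewrite ln_1 in K.
  assert (E2 : vf_phi Q t x y 0 = y * (vf_phi Q t x 1 0 / 1 - T * 0 + T * ln y)).
  { rewrite K. field. lra. }
  rewrite E2. field.
Qed.

Lemma s4_chi gamma Q : SYM gamma Q -> smooth_vfield Q ->
  forall t x y, 0 < y -> vf_chi Q t x y 0 = y * vf_chi Q t x 1 0.
Proof. intros HS Hsm t x y Hy. pose proof Hsm as (_&_&_&Hsc).
  assert (K : (fun s => vf_chi Q t x s 0 / s - 0 * ln s) 1 = (fun s => vf_chi Q t x s 0 / s - 0 * ln s) y).
  { refine (const_line (fun s => vf_chi Q t x s 0 / s - 0 * ln s) (fun s => 0 < s) 1 y _ _); [apply pos_seg'; auto|].
    intros s Hs. pose proof (isd_quot_ln (fun s => vf_chi Q t x s 0) s (dU (vf_chi Q) t x s 0) 0 Hs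
       (isdU _ _ _ _ _ Hsc (d0 s Hs))) as D.
    destruct (step3 gamma Q HS Hsm t x s 0 (d0 s Hs)) as (_&_&P5&_). cbv zeta in P5.
    enough (Z : (dU (vf_chi Q) t x s 0 * s - vf_chi Q t x s 0) / s ^ 2 - 0 / s = 0) by (cbv beta in D; rewrite Z in D; exact D).
    assert (E : vf_chi Q t x s 0 = s * dU (vf_chi Q) t x s 0).
    { apply (Rmult_eq_reg_l s); [|lra]. replace (s * vf_chi Q t x s 0) with
        (- (0 * vf_phi Q t x s 0 - s * vf_chi Q t x s 0)) by ring. rewrite P5. ring. }
    rewrite E. field. lra. }
  simpl in K. 
  assert (E2 : vf_chi Q t x y 0 = y * (vf_chi Q t x 1 0 / 1 - 0 * ln 1 + 0 * ln y)).
  { rewrite K. field. lra. }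
  rewrite E2. field.
Qed.

Lemma s4_chiT gamma Q : SYM gamma Q -> smooth_vfield Q ->
  forall t x y, 0 < y -> dT (vf_chi Q) t x y 0 = y * dT (vf_chi Q) t x 1 0.
Proof. intros HS Hsm t x y Hy. unfold dT.
  rewrite (Derive_ext _ (fun s => y * vf_chi Q s x 1 0)) by (intro; apply (s4_chi gamma Q HS Hsm); auto).
  apply Derive_scal. Qed.

Lemma s4_phiX gamma Q : SYM gamma Q -> smooth_vfield Q ->
  forall t x y, 0 < y -> dX (vf_phi Q) t x y 0 = y * dX (vf_phi Q) t x 1 0.
Proof. intros HS Hsm t x y Hy. pose proof Hsm as (_&_&Hsp&_). unfold dX.
  rewrite (Derive_ext _ (fun s => y * vf_phi Q t s 1 0 + y * dT (vf_tau Q) t x 1 0 * ln y)).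
  2:{ intro s. rewrite (s4_phi gamma Q HS Hsm t s y Hy).
      rewrite (s4_tauT gamma Q HS Hsm t x s 1) by lra. reflexivity. }
  rewrite Derive_plus.
  - rewrite Derive_scal, Derive_const. ring.
  - apply ex_derive_scal_R. apply exX; auto. apply d10.
  - apply ex_derive_const.
Qed.

Lemma s4_phiXX gamma Q : SYM gamma Q -> smooth_vfield Q ->
  forall t x y, 0 < y -> dX (dX (vf_phi Q)) t x y 0 = y * dX (dX (vf_phi Q)) t x 1 0.
Proof. intros HS Hsm t x y Hy. unfold dX at 1 3.
  rewrite (Derive_ext _ (fun s => y * dX (vf_phi Q) t s 1 0)) by (intro; apply (s4_phiX gamma Q HS Hsm); auto).
  apply Derive_scal. Qed.

Lemma s4_Req gamma Q : SYM gamma Q -> smooth_vfield Q ->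
  forall t x y, 0 < y ->
  gamma * Rof gamma y 0 * vf_phi Q t x y 0 - dT (vf_chi Q) t x y 0 + dX (dX (vf_phi Q)) t x y 0 = 0.
Proof.
  intros HS Hsm t x y Hy. pose proof (facts_of_sym gamma Q HS) as HF.
  set (R := Rof gamma y 0).
  set (p := mk t x y 0 (- (R * 0)) (R * y) 0 0 0 0 0).
  assert (Hd : dom p) by (unfold dom, p; mkred; exact (d0 y Hy)).
  destruct (sym_aff gamma Q 0 0 0 0 p HS Hd) as [A _].
  { unfold NLS_re, rho, aff, p; mkred; fold (Rof gamma y 0); fold R; ring. }
  { unfold NLS_im, rho, aff, p; mkred; fold (Rof gamma y 0); fold R; ring. }
  rewrite Ere_m in A by assumption.
  unfold Mxx, RU, RV, rr, rho, aff, p in A. mkred_in A. fold (Rof gamma y 0) in A. fold R in A.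
  destruct (step3 gamma Q HS Hsm t x y 0 (d0 y Hy)) as (P3&_&_&_). cbv zeta in P3.
  assert (E : dV (vf_chi Q) t x y 0 = vf_phi Q t x y 0 / y + dT (vf_tau Q) t x y 0).
  { apply (Rmult_eq_reg_l (y ^ 2)); [|apply pow_nonzero; lra].
    replace (y ^ 2 * (vf_phi Q t x y 0 / y + dT (vf_tau Q) t x y 0)) with
      ((y * vf_phi Q t x y 0 + 0 * vf_chi Q t x y 0) + y ^ 2 * dT (vf_tau Q) t x y 0) by (field; lra).
    rewrite P3. ring. }
  rewrite E in A.
  match type of A with ?L = 0 => transitivity L; [|exact A] end.
  field. lra.
Qed.

Lemma Rof_exp gamma k : Rof gamma (exp k) 0 = exp (gamma * k).
Proof. unfold Rof, Rpower.
  replace (exp k ^ 2 + 0 ^ 2) with (exp (k + k)) by (rewrite exp_plus; ring).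
  rewrite ln_exp. f_equal. field. Qed.

Lemma s4_main gamma Q : gamma <> 0 -> SYM gamma Q -> smooth_vfield Q ->
  forall t x, vf_phi Q t x 1 0 = 0 /\ dT (vf_tau Q) t x 1 0 = 0.
Proof.
  intros Hg HS Hsm t x.
  set (F := vf_phi Q t x 1 0). set (T := dT (vf_tau Q) t x 1 0).
  set (A := dT (vf_chi Q) t x 1 0). set (B := dX (dX (vf_phi Q)) t x 1 0).
  assert (Ek : forall k, gamma * exp (gamma * k) * (F + T * k) = A - B).
  { intro k. pose proof (exp_pos k) as Hk.
    pose proof (s4_Req gamma Q HS Hsm t x (exp k) Hk) as Rq.
    rewrite (s4_phi gamma Q HS Hsm t x (exp k) Hk), (s4_chiT gamma Q HS Hsm t x (exp k) Hk),
      (s4_phiXX gamma Q HS Hsm t x (exp k) Hk), Rof_exp, ln_exp in Rq.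
    fold F T A B in Rq.
    apply (Rmult_eq_reg_l (exp k)); [|lra]. lra. }
  pose proof (Ek 0) as E0. pose proof (Ek 1) as E1. pose proof (Ek 2) as E2.
  rewrite Rmult_0_r, exp_0 in E0. rewrite Rmult_1_r in E1.
  replace (gamma * 2) with (gamma + gamma) in E2 by ring. rewrite exp_plus in E2.
  set (q := exp gamma) in *.
  assert (Hq : 0 < q) by apply exp_pos.
  assert (Hq1 : q <> 1).
  { intro H. apply Hg. rewrite <- (ln_exp gamma). fold q. rewrite H. apply ln_1. }
  assert (H1 : q * (F + T * 1) = F).
  { apply (Rmult_eq_reg_l gamma); auto. lra. }
  assert (H2 : q * q * (F + T * 2) = F).
  { apply (Rmult_eq_reg_l gamma); auto. lra. }
  assert (HF : F * (q - 1) ^ 2 = 0).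
  { replace (F * (q - 1) ^ 2) with ((F - q * q * F) - 2 * q * (F - q * F)) by ring.
    replace (F - q * q * F) with (2 * q * q * T) by lra.
    replace (F - q * F) with (q * T) by lra. ring. }
  apply Rmult_integral in HF. destruct HF as [HF|HF].
  - split; auto. rewrite HF in H1. apply (Rmult_eq_reg_l q); lra.
  - exfalso. apply (pow_nonzero (q - 1) 2); [lra|exact HF].
Qed.

Lemma solve_r (r a x : R) : 0 < r -> r * x = a -> x = a / r.
Proof. intros H E. rewrite <- E. field. lra. Qed.

Ltac nz := repeat split; intro; nra.

Ltac isd_tac Hd Hf Hg E1 E2 :=
  let F1 := fresh in let G1 := fresh in
  match type of Hf with is_derive ?f ?u ?df =>
  match type of Hg with is_derive ?g _ ?dg =>
  assert (F1 : Derive (fun x => f x) u = df) by (apply is_derive_unique; exact Hf);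
  assert (G1 : Derive (fun x => g x) u = dg) by (apply is_derive_unique; exact Hg);
  apply solve_r in E1; auto; apply solve_r in E2; auto;
  auto_derive; [ repeat split; try (eexists; eassumption); nz
               | rewrite F1, G1, E1, E2; field; nz ] end end.

Lemma isd_Su (f g : R -> R) u v df dg : 0 < u ^ 2 + v ^ 2 -> is_derive f u df -> is_derive g u dg ->
  (u ^ 2 + v ^ 2) * df = u * f u + v * g u -> (u ^ 2 + v ^ 2) * dg = u * g u - v * f u ->
  is_derive (fun s => (s * f s + v * g s) / (s ^ 2 + v ^ 2)) u 0.
Proof. intros Hd Hf Hg E1 E2. isd_tac Hd Hf Hg E1 E2. Qed.

Lemma isd_Sv (f g : R -> R) u v df dg : 0 < u ^ 2 + v ^ 2 -> is_derive f v df -> is_derive g v dg ->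
  (u ^ 2 + v ^ 2) * df = v * f v - u * g v -> (u ^ 2 + v ^ 2) * dg = u * f v + v * g v ->
  is_derive (fun s => (u * f s + s * g s) / (u ^ 2 + s ^ 2)) v 0.
Proof. intros Hd Hf Hg E1 E2. isd_tac Hd Hf Hg E1 E2. Qed.

Lemma isd_Cu (f g : R -> R) u v df dg : 0 < u ^ 2 + v ^ 2 -> is_derive f u df -> is_derive g u dg ->
  (u ^ 2 + v ^ 2) * df = u * f u + v * g u -> (u ^ 2 + v ^ 2) * dg = u * g u - v * f u ->
  is_derive (fun s => (s * g s - v * f s) / (s ^ 2 + v ^ 2)) u 0.
Proof. intros Hd Hf Hg E1 E2. isd_tac Hd Hf Hg E1 E2. Qed.

Lemma isd_Cv (f g : R -> R) u v df dg : 0 < u ^ 2 + v ^ 2 -> is_derive f v df -> is_derive g v dg ->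
  (u ^ 2 + v ^ 2) * df = v * f v - u * g v -> (u ^ 2 + v ^ 2) * dg = u * f v + v * g v ->
  is_derive (fun s => (u * g s - s * f s) / (u ^ 2 + s ^ 2)) v 0.
Proof. intros Hd Hf Hg E1 E2. isd_tac Hd Hf Hg E1 E2. Qed.

Lemma s5_tau gamma Q : gamma <> 0 -> SYM gamma Q -> smooth_vfield Q ->
  forall t x u v, domR u v -> vf_tau Q t x u v = vf_tau Q 0 0 1 0.
Proof. intros Hg HS Hsm t x u v Hd. pose proof Hsm as (Hst&_&_&_).
  pose proof (facts_of_sym gamma Q HS) as HF.
  rewrite (conn2 (fun u v => vf_tau Q t x u v)); auto.
  - rewrite (s4_tau_x gamma Q HS Hsm t x 0).
    refine (const_line (fun s => vf_tau Q s 0 1 0) (fun _ => True) t 0 _ _); [intros; exact I|].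
    intros s _. apply is_derive_zero_of; [apply exT; auto; apply d10|].
    exact (proj2 (s4_main gamma Q Hg HS Hsm s 0)).
  - intros u' v' Hd'. destruct (HF t x u' v' Hd') as (_&_&H3&H4). split.
    + apply is_derive_zero_of; [apply exU; auto|exact H3].
    + apply is_derive_zero_of; [apply exV; auto|exact H4].
Qed.

Lemma s5_tauT gamma Q : gamma <> 0 -> SYM gamma Q -> smooth_vfield Q ->
  forall t x u v, domR u v -> dT (vf_tau Q) t x u v = 0.
Proof. intros Hg HS Hsm t x u v Hd. unfold dT.
  rewrite (Derive_ext _ (fun _ => vf_tau Q 0 0 1 0)) by (intro; apply (s5_tau gamma Q Hg HS Hsm); auto).
  apply Derive_const. Qed.

Definition SS (Q : vfield) t x u v := (u * vf_phi Q t x u v + v * vf_chi Q t x u v) / (u ^ 2 + v ^ 2).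
Definition CC (Q : vfield) t x u v := (u * vf_chi Q t x u v - v * vf_phi Q t x u v) / (u ^ 2 + v ^ 2).

Lemma s5_SC gamma Q : gamma <> 0 -> SYM gamma Q -> smooth_vfield Q ->
  forall t x u v, domR u v -> SS Q t x u v = SS Q t x 1 0 /\ CC Q t x u v = CC Q t x 1 0.
Proof. intros Hg HS Hsm t x u v Hd. pose proof Hsm as (_&_&Hsp&Hsc).
  assert (P : forall u' v', domR u' v' ->
    let ph := vf_phi Q t x u' v' in let ch := vf_chi Q t x u' v' in let r := u' ^ 2 + v' ^ 2 in
    r * dU (vf_phi Q) t x u' v' = u' * ph + v' * ch /\
    r * dU (vf_chi Q) t x u' v' = u' * ch - v' * ph /\
    r * dV (vf_phi Q) t x u' v' = v' * ph - u' * ch /\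
    r * dV (vf_chi Q) t x u' v' = u' * ph + v' * ch).
  { intros u' v' Hd'. destruct (step3 gamma Q HS Hsm t x u' v' Hd') as (P3&P4&P5&P6).
    cbv zeta in *. rewrite (s5_tauT gamma Q Hg HS Hsm t x u' v' Hd') in P3, P6.
    repeat split; lra. }
  split.
  - apply (conn2 (fun u v => SS Q t x u v)); auto. intros u' v' Hd'.
    destruct (P u' v' Hd') as (A1&A2&A3&A4). unfold SS. split.
    + exact (isd_Su (fun s => vf_phi Q t x s v') (fun s => vf_chi Q t x s v') u' v' _ _ Hd'
        (isdU _ _ _ _ _ Hsp Hd') (isdU _ _ _ _ _ Hsc Hd') A1 A2).
    + exact (isd_Sv (fun s => vf_phi Q t x u' s) (fun s => vf_chi Q t x u' s) u' v' _ _ Hd'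
        (isdV _ _ _ _ _ Hsp Hd') (isdV _ _ _ _ _ Hsc Hd') A3 A4).
  - apply (conn2 (fun u v => CC Q t x u v)); auto. intros u' v' Hd'.
    destruct (P u' v' Hd') as (A1&A2&A3&A4). unfold CC. split.
    + exact (isd_Cu (fun s => vf_phi Q t x s v') (fun s => vf_chi Q t x s v') u' v' _ _ Hd'
        (isdU _ _ _ _ _ Hsp Hd') (isdU _ _ _ _ _ Hsc Hd') A1 A2).
    + exact (isd_Cv (fun s => vf_phi Q t x u' s) (fun s => vf_chi Q t x u' s) u' v' _ _ Hd'
        (isdV _ _ _ _ _ Hsp Hd') (isdV _ _ _ _ _ Hsc Hd') A3 A4).
Qed.

Lemma s5_forms gamma Q : gamma <> 0 -> SYM gamma Q -> smooth_vfield Q ->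
  forall t x u v, domR u v ->
  vf_phi Q t x u v = - vf_chi Q t x 1 0 * v /\ vf_chi Q t x u v = vf_chi Q t x 1 0 * u.
Proof. intros Hg HS Hsm t x u v Hd.
  destruct (s5_SC gamma Q Hg HS Hsm t x u v Hd) as [E1 E2].
  assert (S1 : SS Q t x 1 0 = 0).
  { unfold SS. rewrite (proj1 (s4_main gamma Q Hg HS Hsm t x)). field. }
  assert (C1 : CC Q t x 1 0 = vf_chi Q t x 1 0).
  { unfold CC. rewrite (proj1 (s4_main gamma Q Hg HS Hsm t x)). field. }
  rewrite S1 in E1. rewrite C1 in E2. unfold SS, CC, domR in *.
  assert (Hr : u ^ 2 + v ^ 2 <> 0) by lra.
  split.
  - replace (vf_phi Q t x u v) with (u * ((u * vf_phi Q t x u v + v * vf_chi Q t x u v) / (u ^ 2 + v ^ 2))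
       - v * ((u * vf_chi Q t x u v - v * vf_phi Q t x u v) / (u ^ 2 + v ^ 2))) by (field; auto).
    rewrite E1, E2. ring.
  - replace (vf_chi Q t x u v) with (v * ((u * vf_phi Q t x u v + v * vf_chi Q t x u v) / (u ^ 2 + v ^ 2))
       + u * ((u * vf_chi Q t x u v - v * vf_phi Q t x u v) / (u ^ 2 + v ^ 2))) by (field; auto).
    rewrite E1, E2. ring.
Qed.

Lemma s5_Gt gamma Q : gamma <> 0 -> SYM gamma Q -> smooth_vfield Q ->
  forall t x, dT (vf_chi Q) t x 1 0 = 0.
Proof. intros Hg HS Hsm t x.
  pose proof (s4_Req gamma Q HS Hsm t x 1 ltac:(lra)) as Rq.
  rewrite (proj1 (s4_main gamma Q Hg HS Hsm t x)) in Rq.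
  assert (Z : dX (dX (vf_phi Q)) t x 1 0 = 0).
  { unfold dX at 1. rewrite (Derive_ext _ (fun _ => 0)). apply Derive_const.
    intro s. unfold dX. rewrite (Derive_ext _ (fun _ => 0)). apply Derive_const.
    intro s'. exact (proj1 (s4_main gamma Q Hg HS Hsm t s')). }
  rewrite Z in Rq. lra. Qed.

Lemma s5_dVphi gamma Q : gamma <> 0 -> SYM gamma Q -> smooth_vfield Q ->
  forall t x s, dV (vf_phi Q) t x 1 s = - vf_chi Q t x 1 0.
Proof. intros Hg HS Hsm t x s.
  assert (Hd : domR 1 s) by (unfold domR; assert (0 <= s ^ 2) by apply pow2_ge_0; lra).
  rewrite (dV_ext_dom (vf_phi Q) (fun t x u v => - vf_chi Q t x 1 0 * v)); auto.
  - unfold dV. apply is_derive_unique. auto_derive; auto; ring.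
  - intros s' Hs'. exact (proj1 (s5_forms gamma Q Hg HS Hsm t x 1 s' Hs')). Qed.

Lemma s5_Gx gamma Q : gamma <> 0 -> SYM gamma Q -> smooth_vfield Q ->
  forall t x, dX (vf_chi Q) t x 1 0 = 0.
Proof. intros Hg HS Hsm t x. pose proof (facts_of_sym gamma Q HS) as HF.
  set (R := Rof gamma 1 0).
  set (p0 := mk t x 1 0 (- (R * 0)) (R * 1) 0 0 0 0 0).
  set (p1 := mk t x 1 0 (- (R * 0)) (R * 1) 0 1 0 0 0).
  assert (Hd0 : dom p0) by (unfold dom, p0; mkred; exact d10).
  assert (Hd1 : dom p1) by (unfold dom, p1; mkred; exact d10).
  destruct (sym_aff gamma Q 0 0 0 0 p0 HS Hd0) as [A0 _].
  { unfold NLS_re, rho, aff, p0; mkred; fold (Rof gamma 1 0); fold R; ring. }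
  { unfold NLS_im, rho, aff, p0; mkred; fold (Rof gamma 1 0); fold R; ring. }
  destruct (sym_aff gamma Q 0 0 0 0 p1 HS Hd1) as [A1 _].
  { unfold NLS_re, rho, aff, p1; mkred; fold (Rof gamma 1 0); fold R; ring. }
  { unfold NLS_im, rho, aff, p1; mkred; fold (Rof gamma 1 0); fold R; ring. }
  rewrite Ere_m in A0, A1 by assumption.
  unfold Mxx, RU, RV, rr, rho, aff, p0, p1 in A0, A1. mkred_in A0. mkred_in A1.
  pose proof (f_equal2 Rminus A1 A0) as D. ring_simplify in D.
  assert (K1 : dX (dV (vf_phi Q)) t x 1 0 = - dX (vf_chi Q) t x 1 0).
  { unfold dX at 1. rewrite (Derive_ext _ (fun s => - vf_chi Q t s 1 0)).
    - apply Derive_opp.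
    - intro s. apply (s5_dVphi gamma Q Hg HS Hsm). }
  assert (K2 : dV (dX (vf_phi Q)) t x 1 0 = - dX (vf_chi Q) t x 1 0).
  { unfold dV at 1. rewrite (Derive_ext _ (fun s' => (- s') * dX (vf_chi Q) t x 1 0)).
    - apply is_derive_unique. auto_derive; auto; ring.
    - intro s'. unfold dX. rewrite (Derive_ext _ (fun s => (- s') * vf_chi Q t s 1 0)).
      + apply Derive_scal.
      + intro s. rewrite (proj1 (s5_forms gamma Q Hg HS Hsm t s 1 s' ltac:(unfold domR; assert (0 <= s' ^ 2) by apply pow2_ge_0; lra))).
        ring. }
  assert (K3 : dV (dV (vf_phi Q)) t x 1 0 = 0).
  { unfold dV at 1. rewrite (Derive_ext _ (fun _ => - vf_chi Q t x 1 0)).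
    - apply Derive_const.
    - intro s. apply (s5_dVphi gamma Q Hg HS Hsm). }
  rewrite K1, K2, K3 in D. lra.
Qed.

Lemma s5_Gconst gamma Q : gamma <> 0 -> SYM gamma Q -> smooth_vfield Q ->
  forall t x, vf_chi Q t x 1 0 = vf_chi Q 0 0 1 0.
Proof. intros Hg HS Hsm t x. pose proof Hsm as (_&_&_&Hsc).
  transitivity (vf_chi Q t 0 1 0).
  - refine (const_line (fun s => vf_chi Q t s 1 0) (fun _ => True) x 0 _ _); [intros; exact I|].
    intros s _. apply is_derive_zero_of; [apply exX; auto; apply d10|].
    apply (s5_Gx gamma Q Hg HS Hsm).
  - refine (const_line (fun s => vf_chi Q s 0 1 0) (fun _ => True) t 0 _ _); [intros; exact I|].
    intros s _. apply is_derive_zero_of; [apply exT; auto; apply d10|].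
    apply (s5_Gt gamma Q Hg HS Hsm).
Qed.

Lemma forward gamma Q : gamma <> 0 -> smooth_vfield Q -> SYM gamma Q -> in_span_M_Dt Q.
Proof. intros Hg Hsm HS. exists (vf_chi Q 0 0 1 0), (vf_tau Q 0 0 1 0).
  intros t x u v Hd. pose proof (facts_of_sym gamma Q HS) as HF.
  destruct (s5_forms gamma Q Hg HS Hsm t x u v Hd) as [E1 E2].
  rewrite (s5_Gconst gamma Q Hg HS Hsm t x) in E1, E2.
  split; [apply (s5_tau gamma Q Hg HS Hsm); exact Hd|].
  split; [apply (HF t x u v Hd)|]. split; [rewrite E1; ring|rewrite E2; ring].
Qed.

Theorem lemma9 (gamma : R) (Hgamma : gamma <> 0) (Q : vfield) (HQ : smooth_vfield Q) :
  (forall a b : R -> R, smooth1 a -> smooth1 b -> is_lie_symmetry gamma a b Q)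
  <-> in_span_M_Dt Q.
Proof.
  split.
  - intro HS. apply (forward gamma Q Hgamma HQ HS).
  - intros Hsp a b _ _. apply (converse gamma Q HQ Hsp).
Qed.
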